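(* Let $q$ be a prime power, let $m,n\ge1$ with $\gcd(n,q^m-1)=1$. Let $l(x)=\sum_{v=0}^{m} b_v x^{q^v}\in\mathbb{F}_q[x]$ be such that its conventional $q$-associate $\bar l(x)=\sum_{v=0}^m b_v x^v$ is a primitive polynomial of degree $m$ over $\mathbb{F}_q$ with $\bar l(x)\neq x-1$. Let $f(x)$ be a monic irreducible polynomial of degree $n$ over $\mathbb{F}_q$. Let $R(x)$ be the remainder of $l(x)$ modulo $f(x)$, and let $\psi(x)=\sum_{u=0}^n\psi_u x^u\in\mathbb{F}_q[x]$ be the monic nonzero polynomial of least degree satisfying $$\sum_{u=0}^{n}\psi_u\,(R(x))^u\equiv 0\pmod{f(x)}.$$ Then $\psi(x)$ is an irreducible polynomial of degree $n$ over $\mathbb{F}_q$, and $F(x)=\psi(l(x))/f(x)$ is an irreducible polynomial of degree $n(q^m-1)$ over $\mathbb{F}_q$.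
   Context: A primitive polynomial of degree $m$ over $\mathbb{F}_q$ is a monic irreducible polynomial of degree $m$ whose roots are generators of the multiplicative group $\mathbb{F}_{q^m}^*$. *)

(* Defs.v *)
From HB Require Import structures.
From mathcomp Require Import all_boot all_order all_algebra all_field.
Set Implicit Arguments. Unset Strict Implicit. Unset Printing Implicit Defensive.
Import GRing.Theory.
Local Open Scope ring_scope.

(* Primitive polynomials: we use mathcomp's qfpoly.primitive_poly
   (monic, irreducible, and X has multiplicative order exactly q^deg - 1
   modulo p, i.e. its roots generate the multiplicative group of F_{q^deg}). *)

Definition linpoly (F : finFieldType) (m : nat) (b : nat -> F) : {poly F} :=
  \sum_(v < m.+1) b v *: 'X^(#|F| ^ v).

Definition conv_assoc (F : finFieldType) (m : nat) (b : nat -> F) : {poly F} :=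
  \sum_(v < m.+1) b v *: 'X^v.

(* Main.v *)
Require Import Defs.
From HB Require Import structures.
From mathcomp Require Import all_boot all_order all_algebra all_field.
From Stdlib Require Import Classical.
Import GRing.Theory.
Local Open Scope ring_scope.

Module Helpers.
Set Implicit Arguments. Unset Strict Implicit. Unset Printing Implicit Defensive.

Section Lin.
Variable F : finFieldType.
Local Notation q := #|F|.
Variable K : fieldType.
Variable iota : {rmorphism F -> K}.

Lemma qnatK : [pchar K].-nat q.
Proof.
have [p pr pc] := finPcharP F.
have -> : q = (p ^ logn p q)%N by exact: (card_pprimeChar pc).
by rewrite pnatX pnatE // (rmorph_pchar iota pc).
Qed.

Lemma frD i (x y : K) : (x + y) ^+ (q ^ i) = x ^+ (q ^ i) + y ^+ (q ^ i).
Proof. by apply: exprDn_pchar; rewrite pnatX qnatK. Qed.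

Lemma q_gt1 : (1 < q)%N.
Proof. exact: finNzRing_gt1. Qed.

Lemma fr0 i : (0 : K) ^+ (q ^ i) = 0.
Proof. by rewrite expr0n expn_eq0 (negbTE (lt0n_neq0 (ltnW q_gt1))). Qed.

Lemma frN i (x : K) : (- x) ^+ (q ^ i) = - x ^+ (q ^ i).
Proof. by apply/eqP; rewrite -addr_eq0 -frD addNr fr0. Qed.

Lemma frB i (x y : K) : (x - y) ^+ (q ^ i) = x ^+ (q ^ i) - y ^+ (q ^ i).
Proof. by rewrite frD frN. Qed.

Lemma frF i (a : F) : iota a ^+ (q ^ i) = iota a.
Proof.
rewrite -rmorphXn; congr (iota _).
elim: i => [|i IH]; first by rewrite expr1.
by rewrite expnSr exprM IH expf_card.
Qed.

Lemma fr_sum i (I : Type) (r : seq I) (P : pred I) (G : I -> K) :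
  (\sum_(j <- r | P j) G j) ^+ (q ^ i) = \sum_(j <- r | P j) G j ^+ (q ^ i).
Proof. by apply: (big_morph (fun z => z ^+ (q ^ i))); [exact: frD|exact: fr0]. Qed.

Lemma frfr i j (x : K) : (x ^+ (q ^ i)) ^+ (q ^ j) = x ^+ (q ^ (i + j)).
Proof. by rewrite -exprM -expnD. Qed.

Definition Lin (p : {poly F}) (x : K) := \sum_(i < size p) iota p`_i * x ^+ (q ^ i).

Lemma LinE N (p : {poly F}) (x : K) : (size p <= N)%N -> Lin p x = \sum_(i < N) iota p`_i * x ^+ (q ^ i).
Proof.
move=> H; rewrite /Lin (big_ord_widen N (fun i => iota p`_i * x ^+ (q ^ i))) //.
rewrite big_mkcond /=; apply: eq_bigr => i _; case: ifP => // /negbT.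
by rewrite -leqNgt => Hi; rewrite nth_default // rmorph0 mul0r.
Qed.

Lemma LinD (p r : {poly F}) (x : K) : Lin (p + r) x = Lin p x + Lin r x.
Proof.
set N := maxn (size p) (size r).
rewrite (@LinE N) ?(leq_trans (size_polyD _ _)) // (@LinE N p) ?leq_maxl //.
rewrite (@LinE N r) ?leq_maxr // -big_split /=; apply: eq_bigr => i _.
by rewrite coefD rmorphD mulrDl.
Qed.

Lemma LinN (p : {poly F}) (x : K) : Lin (- p) x = - Lin p x.
Proof.
rewrite /Lin size_polyN -sumrN; apply: eq_bigr => i _.
by rewrite coefN rmorphN mulNr.
Qed.

Lemma LinB (p r : {poly F}) (x : K) : Lin (p - r) x = Lin p x - Lin r x.
Proof. by rewrite LinD LinN. Qed.

Lemma Lin_addx (p : {poly F}) (x y : K) : Lin p (x + y) = Lin p x + Lin p y.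
Proof. by rewrite /Lin -big_split; apply: eq_bigr => i _; rewrite frD mulrDr. Qed.

Lemma Lin0x (p : {poly F}) : Lin p 0 = 0.
Proof. by rewrite /Lin big1 // => i _; rewrite fr0 mulr0. Qed.

Lemma Lin_subx (p : {poly F}) (x y : K) : Lin p (x - y) = Lin p x - Lin p y.
Proof.
apply/eqP; rewrite eq_sym subr_eq -Lin_addx subrK //.
Qed.

Lemma Lin_fr i (p : {poly F}) (x : K) : Lin p x ^+ (q ^ i) = Lin p (x ^+ (q ^ i)).
Proof.
rewrite /Lin fr_sum; apply: eq_bigr => j _.
by rewrite exprMn frF !frfr addnC.
Qed.

Lemma LinC (a : F) (x : K) : Lin a%:P x = iota a * x.
Proof.
rewrite (@LinE 1) ?size_polyC ?leq_b1 // big_ord1 coefC /= expr1.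
by [].
Qed.

Lemma LinZ (a : F) (p : {poly F}) (x : K) : Lin (a *: p) x = iota a * Lin p x.
Proof.
rewrite (@LinE (size p)) ?size_scale_leq // /Lin mulr_sumr; apply: eq_bigr => i _.
by rewrite coefZ rmorphM mulrA.
Qed.

Lemma LinXM (p : {poly F}) (x : K) : Lin (p * 'X) x = Lin p (x ^+ q).
Proof.
rewrite (@LinE (size p).+1); last first.
  by have [->|pn0] := eqVneq p 0; rewrite ?mul0r ?size_poly0 // size_mulX.
rewrite big_ord_recl coefMX /= rmorph0 mul0r add0r /Lin; apply: eq_bigr => i _.
by rewrite coefMX /= -[x ^+ q]expr1 -(expn1 q) frfr.
Qed.

Lemma LinM (p r : {poly F}) (x : K) : Lin (p * r) x = Lin p (Lin r x).
Proof.
elim/poly_ind: p x => [|p c IH] x.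
  by rewrite mul0r /Lin !size_poly0 !big_ord0.
rewrite mulrDl.
have -> : p * 'X * r = p * r * 'X by rewrite -!mulrA (mulrC 'X).
rewrite LinD LinXM IH mul_polyC LinZ.
by rewrite LinD LinXM LinC -(expn1 q) Lin_fr.
Qed.

Lemma Lin1 (x : K) : Lin 1 x = x.
Proof. by rewrite -polyC1 LinC rmorph1 mul1r. Qed.

Lemma LinXn k (x : K) : Lin 'X^k x = x ^+ (q ^ k).
Proof.
elim: k x => [|k IH] x; first by rewrite expr0 Lin1 expn0 expr1.
by rewrite exprSr LinXM IH -exprM -expnS.
Qed.


Lemma LinXn1 k (x : K) : Lin ('X^k - 1) x = x ^+ (q ^ k) - x.
Proof. by rewrite LinB LinXn Lin1. Qed.

Local Notation "p ^i" := (map_poly iota p) (at level 2, format "p ^i").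

Lemma fr_eval i (p : {poly F}) (y : K) : p^i.[y] ^+ (q ^ i) = p^i.[y ^+ (q ^ i)].
Proof.
rewrite !horner_coef fr_sum; apply: eq_bigr => j _.
by rewrite exprMn coef_map frF exprAC.
Qed.

Definition Lpoly (p : {poly F}) : {poly F} := \sum_(i < size p) p`_i *: 'X^(q ^ i).

Lemma Lpoly_eval (p : {poly F}) (x : K) : (Lpoly p)^i.[x] = Lin p x.
Proof.
rewrite /Lpoly rmorph_sum horner_sum; apply: eq_bigr => j _.
by rewrite /= map_polyZ hornerZ map_polyXn hornerXn.
Qed.

Lemma comp_eval (p r : {poly F}) (x : K) : (p \Po r)^i.[x] = p^i.[r^i.[x]].
Proof. by rewrite map_comp_poly horner_comp. Qed.

Lemma dvd_eval (g r : {poly F}) (y : K) : g %| r -> g^i.[y] = 0 -> r^i.[y] = 0.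
Proof. by move=> /divpK <- H; rewrite rmorphM hornerM H mulr0. Qed.

Lemma mod_eval (g p : {poly F}) (y : K) : g^i.[y] = 0 -> (p %% g)^i.[y] = p^i.[y].
Proof.
by move=> H; rewrite {2}(divp_eq p g) rmorphD rmorphM !hornerE H mulr0 add0r.
Qed.

Lemma Bezout_Lin (c w : {poly F}) (x : K) : coprimep c w ->
  Lin c x = 0 -> Lin w x = 0 -> x = 0.
Proof.
move=> /Bezout_eq1_coprimepP [[u v] /= E] H1 H2.
by rewrite -(Lin1 x) -E LinD !LinM H1 H2 !Lin0x addr0.
Qed.

Lemma INJ (g p : {poly F}) (y : K) : irreducible_poly g -> g^i.[y] = 0 ->
  (size p < size g)%N -> p^i.[y] = 0 -> p = 0.
Proof.
move=> gI gy sp py; apply/eqP; apply: contraT => pn0.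
have : coprimep g p.
  rewrite irreducible_poly_coprime //; apply/negP => /(dvdp_leq pn0).
  by rewrite leqNgt sp.
move=> /Bezout_eq1_coprimepP [[u v] /= E].
have := congr1 (fun z => z^i.[y]) E; rewrite /= rmorphD !rmorphM !hornerE gy py.
by rewrite mulr0 mulr0 addr0 rmorph1 hornerC => /eqP; rewrite eq_sym oner_eq0.
Qed.

Lemma DEG (g : {poly F}) (y : K) r : irreducible_poly g -> g^i.[y] = 0 ->
  y ^+ (q ^ r) = y -> (0 < r)%N -> ((size g).-1 <= r)%N.
Proof.
move=> gI gy yr r0; set n := (size g).-1.
have sg : size g = n.+1 by rewrite /n prednK // (ltn_trans _ gI.1).
pose s := [seq (val p)^i.[y] | p <- enum {poly_n F}].
have us : uniq s.
  rewrite map_inj_uniq ?enum_uniq // => p1 p2 E; apply: val_inj => /=.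
  apply/eqP; rewrite -subr_eq0; apply/eqP; apply: (INJ gI gy).
    by rewrite sg ltnS (leq_trans (size_polyD _ _)) // size_polyN geq_max !size_npoly.
  by rewrite rmorphB /= hornerD hornerN E subrr.
have rs : all (root ('X^(q ^ r) - 'X : {poly K})) s.
  apply/allP => z /mapP [p _ ->]; rewrite rootE hornerD hornerN hornerXn hornerX fr_eval yr subrr //.
have q1 := q_gt1.
have qr1 : (1 < q ^ r)%N by rewrite -(expn0 q) ltn_exp2l.
have sz : size ('X^(q ^ r) - 'X : {poly K}) = (q ^ r).+1.
  by rewrite size_polyDl ?size_polyXn ?size_polyN ?size_polyX.
have := max_poly_roots _ rs us; rewrite -size_poly_eq0 sz => /(_ isT).
by rewrite ltnS size_map -cardE card_npoly leq_exp2l.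
Qed.

End Lin.
Section Q.
Variable F : finFieldType.
Variable h : {poly F}.
Hypothesis hMI : monic_irreducible_poly h.
Local Notation K := {poly %/ h with hMI}.
Check (K : finFieldType).
Check (K : fieldType).
Definition io : {rmorphism F -> K} := qpolyC h.
Lemma cardK : #|K| = (#|F| ^ (size h).-1)%N.
Proof. exact: card_qfpoly. Qed.
Lemma evalK (p : {poly F}) : (map_poly io p).['qX : K] = in_qpoly h p.
Proof. by rewrite -in_qpoly_comp_horner comp_polyXr. Qed.
Lemma in_qpoly_eq0 (p : {poly F}) : (in_qpoly h p == 0) = (h %| p).
Proof.
have [hI hM] := hMI.
have mk : mk_monic h = h by rewrite /mk_monic hI.1 hM.
apply/eqP/idP => [/val_eqP /= | hDp].
  by rewrite -Pdiv.IdomainMonic.modpE mk //.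
by apply/val_eqP; rewrite /= -Pdiv.IdomainMonic.modpE mk // -dvdpE.
Qed.
End Q.

Lemma FACT (F : fieldType) (p : {poly F}) : (1 < size p)%N ->
  exists h, [/\ irreducible_poly h, h \is monic & h %| p].
Proof.
move: {2}(size p) (leqnn (size p)) => k; elim: k p => [|k IH] p sp sp1.
  by move: (leq_trans sp1 sp).
have pn0 : p != 0 by rewrite -size_poly_gt0 (ltn_trans _ sp1).
case: (classic (exists g : {poly F}, [/\ size g != 1%N, g %| p & ~~ (g %= p)])).
  move=> [g [g1 gp ngp]].
  have gn0 : g != 0 by apply: contraNneq pn0 => g0; move: gp; rewrite g0 dvd0p => /eqP ->.
  have sg : (size g < size p)%N.
    by rewrite ltn_neqAle dvdp_leq // andbT; apply: contraNneq ngp => /eqP; rewrite dvdp_size_eqp.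
  have sg1 : (1 < size g)%N.
    by rewrite ltn_neqAle eq_sym g1 /= size_poly_gt0.
  have [h [hI hM hg]] := IH g (leq_trans sg sp) sg1.
  by exists h; split => //; apply: dvdp_trans hg gp.
move=> H.
have pI : irreducible_poly p.
  split => // g g1 gp; apply: NNPP => ngp; apply: H; exists g; split => //.
  by apply/negP.
have lc0 : lead_coef p != 0 by rewrite lead_coef_eq0.
exists ((lead_coef p)^-1 *: p); split.
- split; first by rewrite size_scale ?invr_eq0.
  move=> g g1 gp; have /pI : g %| p by rewrite (eqp_dvdr _ (eqp_scale _ _)) // ?invr_eq0 // in gp.
  move=> /(_ g1) gep; apply: (eqp_trans gep); rewrite eqp_sym eqp_scale // invr_eq0 //.
- by rewrite monicE lead_coefZ mulVf.
- by rewrite dvdpZl ?invr_eq0.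
Qed.

Section Main.
Variables (F : finFieldType) (m n : nat) (b : nat -> F) (f psi : {poly F}).
Hypotheses (Hm : (1 <= m)%N) (Hn : (1 <= n)%N)
  (Hcop : coprime n (#|F| ^ m - 1))
  (Hprim : primitive_poly (conv_assoc m b)) (Hsc : size (conv_assoc m b) = m.+1)
  (Hneq : conv_assoc m b != 'X - 1)
  (fM : f \is monic) (fI : irreducible_poly f) (sf : size f = n.+1)
  (psiM : psi \is monic)
  (Hdiv : f %| (psi \Po (linpoly m b %% f)))
  (Hmin : forall p : {poly F}, p != 0 -> f %| (p \Po (linpoly m b %% f)) ->
     (size psi <= size p)%N).

Local Notation q := #|F|.
Local Notation c := (conv_assoc m b).
Local Notation l := (linpoly m b).
Local Notation e := (q ^ m - 1)%N.

Lemma q1 : (1 < q)%N. Proof. exact: finNzRing_gt1. Qed.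

Lemma e_gt0 : (0 < e)%N.
Proof. by rewrite subn_gt0 -(expn0 q) ltn_exp2l ?q1. Qed.

Lemma cMI : monic_irreducible_poly c.
Proof. by case/primitive_polyP: Hprim. Qed.

Lemma c_card : #|{poly %/ c}|.-1 = e.
Proof.
have [cI cM] := cMI.
by rewrite card_monic_qpoly ?Hsc // -subn1.
Qed.

Lemma c_dvd_e : c %| 'X^e - 1.
Proof. by case/primitive_polyP: Hprim; rewrite c_card. Qed.

Lemma c_min k : (0 < k < e)%N -> ~~ (c %| 'X^k - 1).
Proof. by case/primitive_polyP: Hprim; rewrite c_card => _ _; apply. Qed.

Lemma Xpow_dvd a k : ('X^k - 1 : {poly F}) %| 'X^(k * a) - 1.
Proof. by rewrite exprM [X in _ %| X]subrX1 dvdp_mulr ?dvdpp. Qed.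

Lemma c_ord k : c %| 'X^k - 1 -> (e %| k)%N.
Proof.
move=> H; rewrite /dvdn; apply: contraTT H => r0.
have E : ('X^k - 1 : {poly F}) = 'X^(k %% e) * ('X^(e * (k %/ e)) - 1) + ('X^(k %% e) - 1).
  rewrite mulrBr mulr1 -exprD addrA subrK; congr (_ - _); congr ('X^_).
  by rewrite addnC mulnC -divn_eq.
rewrite E dvdp_addr; last by apply: dvdp_mull; apply: dvdp_trans c_dvd_e (Xpow_dvd _ _).
by apply: c_min; rewrite lt0n r0 ltn_mod e_gt0.
Qed.

Lemma c_cop : coprimep c ('X^n - 1).
Proof.
have [cI cM] := cMI.
rewrite irreducible_poly_coprime //; apply/negP => /[dup] H /c_ord en.
have e1 : e = 1%N by move: Hcop; rewrite /coprime; move/gcdn_idPr: en => ->; move/eqP.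
have := c_dvd_e; rewrite e1 expr1 -polyC1 => Hc; move/negP: Hneq; apply.
have sc2 : (size c <= 2)%N by move: (dvdp_leq (negbT (polyXsubC_eq0 1)) Hc); rewrite size_XsubC.
rewrite -polyC1 -eqp_monic ?monicXsubC // -dvdp_size_eqp // size_XsubC eqn_leq sc2 Hsc.
by rewrite ltnS.
Qed.

Lemma coefc i : c`_i = if (i < m.+1)%N then b i else 0.
Proof. by rewrite /conv_assoc -poly_def coef_poly. Qed.

Lemma c0 : c`_0 != 0.
Proof.
apply/negP => /eqP H.
have : root c 0 by rewrite rootE horner_coef0 H.
move/(root_dvdp c_dvd_e); rewrite rootE !hornerE expr0n (gtn_eqF e_gt0) /=.
by rewrite sub0r oppr_eq0 oner_eq0.
Qed.

Lemma l_eq : l = Lpoly c.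
Proof. by rewrite /Lpoly Hsc /linpoly; apply: eq_bigr => i _; rewrite coefc ltn_ord. Qed.

Lemma bm1 : b m = 1.
Proof.
have [_ cM] := cMI; move/monicP: cM; rewrite lead_coefE Hsc /= coefc ltnSn //.
Qed.

Lemma size_l : size l = (q ^ m).+1.
Proof.
rewrite /linpoly big_ord_recr /= bm1 scale1r addrC size_polyDl ?size_polyXn //.
rewrite ltnS.
apply: (big_ind (fun p : {poly F} => size p <= q ^ m)%N) => //.
  by rewrite size_poly0.
  by move=> x y Hx Hy; rewrite (leq_trans (size_polyD _ _)) // geq_max Hx.
move=> i _; rewrite (leq_trans (size_scale_leq _ _)) // size_polyXn.
by rewrite ltn_exp2l ?q1.
Qed.

Lemma qR0 : (q%:R : F) = 0.
Proof.
have [p pr pc] := finPcharP F.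
have E : q = (p ^ logn p q)%N by exact: (card_pprimeChar pc).
have k0 : (0 < logn p q)%N.
  rewrite lt0n; apply/negP => /eqP k0; move: q1; rewrite E k0 expn0 ltnn //.
by rewrite E natrX (pcharf0 pc) expr0n (gtn_eqF k0).
Qed.

Lemma qPR0 i : (0 < i)%N -> ((q ^ i)%:R : {poly F}) = 0.
Proof.
by move=> i0; rewrite -polyC_natr natrX qR0 expr0n (gtn_eqF i0).
Qed.

Lemma deriv_l : l^`() = (c`_0)%:P.
Proof.
rewrite /linpoly big_ord_recl /= derivD.
have -> : (\sum_(i < m) b (bump 0 i) *: 'X^(q ^ bump 0 i))^`() = 0.
  apply: (big_ind (fun p : {poly F} => p^`() = 0)); first exact: deriv0.
    by move=> x y Hx Hy; rewrite derivD Hx Hy addr0.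
  move=> i _; rewrite derivZ derivXn -mulr_natr qPR0 ?mulr0 ?scaler0 //.
by rewrite addr0 expn0 expr1 derivZ derivX coefc /= alg_polyC.
Qed.

Lemma uv_ex : exists uv : {poly F} * {poly F}, uv.1 * c + uv.2 * ('X^n - 1) = 1.
Proof. exact/Bezout_eq1_coprimepP/c_cop. Qed.

Lemma l_eval (K : fieldType) (iota : {rmorphism F -> K}) x :
  (map_poly iota l).[x] = Lin iota c x.
Proof. by rewrite l_eq Lpoly_eval. Qed.

Let fMI : monic_irreducible_poly f := (fI, fM).
Local Notation E1 := {poly %/ f with fMI}.
Let i1 := io fMI.
Let al : E1 := 'qX.
Let be := Lin i1 c al.

Lemma key1 g : ((map_poly i1 g).[al] == 0) = (f %| g).
Proof. by rewrite evalK in_qpoly_eq0. Qed.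

Lemma f_al : (map_poly i1 f).[al] = 0.
Proof. by apply/eqP; rewrite key1 dvdpp. Qed.

Lemma key2 p : (f %| p \Po (l %% f)) = ((map_poly i1 p).[be] == 0).
Proof. by rewrite -key1 comp_eval mod_eval ?f_al // l_eval. Qed.

Lemma key3 p : (f %| p \Po l) = ((map_poly i1 p).[be] == 0).
Proof. by rewrite -key1 comp_eval l_eval. Qed.

Lemma al_fix : al ^+ (q ^ n) = al.
Proof.
have E : #|E1| = (q ^ n)%N by rewrite cardK sf.
by rewrite -E expf_card.
Qed.

Lemma psi_be : (map_poly i1 psi).[be] = 0.
Proof. by apply/eqP; rewrite -key2. Qed.

Lemma psi_n0 : psi != 0.
Proof. exact: monic_neq0. Qed.

Lemma minb p : p != 0 -> (map_poly i1 p).[be] = 0 -> (size psi <= size p)%N.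
Proof. by move=> pn0 H; apply: Hmin => //; rewrite key2 H. Qed.

Lemma psi_dvd p : (map_poly i1 p).[be] = 0 -> psi %| p.
Proof.
move=> H; apply/modp_eq0P/eqP; apply: contraT => H2.
have H3 : (map_poly i1 (p %% psi)).[be] = 0 by rewrite mod_eval ?psi_be.
by have := minb H2 H3; rewrite leqNgt ltn_modp psi_n0.
Qed.

Lemma psi_irr : irreducible_poly psi.
Proof.
have s1 : (1 < size psi)%N.
  rewrite ltnNge; apply/negP => H.
  have E := size1_polyC H.
  move: psi_be; rewrite E map_polyC hornerC => /eqP; rewrite fmorph_eq0 => /eqP a0.
  by move: psi_n0; rewrite E a0 eqxx.
split => // g g1 gpsi.
have gn0 : g != 0 by apply: contraNneq psi_n0 => g0; move: gpsi; rewrite g0 dvd0p => /eqP ->.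
have E := divpK gpsi.
have qn0 : psi %/ g != 0 by apply: contraNneq psi_n0 => q0; rewrite -E q0 mul0r.
have H0 := psi_be; rewrite -E rmorphM hornerM in H0.
move/eqP: H0; rewrite mulf_eq0 => /orP [] /eqP H.
  have := minb qn0 H; rewrite -{1}E size_mul //.
  have sg : (0 < size g)%N by rewrite size_poly_gt0.
  rewrite -(prednK sg) addnS /= -{2}[size (psi %/ g)]addn0 leq_add2l leqn0 => /eqP sg0.
  by move: g1; rewrite -(prednK sg) sg0.
by rewrite -dvdp_size_eqp // eqn_leq dvdp_leq ?psi_n0 // minb.
Qed.

Let psiMI : monic_irreducible_poly psi := (psi_irr, psiM).
Local Notation K2 := {poly %/ psi with psiMI}.
Let i2 := io psiMI.
Let rho : K2 := 'qX.

Lemma keyK2 g : ((map_poly i2 g).[rho] == 0) = (psi %| g).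
Proof. by rewrite evalK in_qpoly_eq0. Qed.

Lemma psi_rho : (map_poly i2 psi).[rho] = 0.
Proof. by apply/eqP; rewrite keyK2 dvdpp. Qed.

Lemma rho_fix : rho ^+ (q ^ (size psi).-1) = rho.
Proof.
have E : #|K2| = (q ^ (size psi).-1)%N by rewrite cardK.
by rewrite -E expf_card.
Qed.

Lemma psi_size_le : (size psi <= n.+1)%N.
Proof.
pose phi (p : {poly_(n.+1) F}) : E1 := (map_poly i1 (val p)).[be].
have : ~~ injectiveb phi.
  apply/negP => /injectiveP inj; have := @leq_card _ _ phi inj.
  by rewrite card_npoly cardK sf leq_exp2l ?q1 // ltnn.
move/injectivePn => [p1 [p2 ne E]].
have pn0 : val p1 - val p2 != 0 by rewrite subr_eq0; apply: contra ne => /eqP /val_inj ->.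
apply: (leq_trans (minb pn0 _)).
  by rewrite rmorphB /= hornerD hornerN; rewrite /phi in E; rewrite E subrr.
by rewrite (leq_trans (size_polyD _ _)) // size_polyN geq_max !size_npoly.
Qed.

Section UV.
Variables u v : {poly F}.
Hypothesis Huv : u * c + v * ('X^n - 1) = 1.

Lemma invLin (K : fieldType) (iota : {rmorphism F -> K}) x :
  x ^+ (q ^ n) = x -> Lin iota u (Lin iota c x) = x.
Proof.
move=> H; rewrite -LinM.
have -> : u * c = 1 - v * ('X^n - 1) by apply/eqP; rewrite eq_sym subr_eq Huv.
by rewrite LinB Lin1 LinM LinXn1 H subrr Lin0x subr0.
Qed.

Lemma al_u : Lin i1 u be = al.
Proof. exact: invLin al_fix. Qed.

Lemma psi_dvd_fu : psi %| f \Po Lpoly u.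
Proof. by apply: psi_dvd; rewrite comp_eval Lpoly_eval al_u f_al. Qed.


Lemma psi_size : size psi = n.+1.
Proof.
apply/eqP; rewrite eqn_leq psi_size_le /=.
have s1 := psi_irr.1.
pose y := Lin i2 u rho.
have fy : (map_poly i2 f).[y] = 0.
  by have := dvd_eval psi_dvd_fu psi_rho; rewrite comp_eval Lpoly_eval.
have yfix : y ^+ (q ^ (size psi).-1) = y by rewrite /y Lin_fr rho_fix.
have d0 : (0 < (size psi).-1)%N by rewrite -subn1 subn_gt0.
have := DEG fI fy yfix d0; rewrite sf /=.
by rewrite -[X in (_ < X)%N](prednK (ltnW s1)) ltnS.
Qed.


Lemma psi_dvd_Xq : psi %| 'X^(q ^ n) - 'X.
Proof.
rewrite -keyK2 rmorphB /= map_polyXn map_polyX hornerD hornerN hornerXn hornerX.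
by have := rho_fix; rewrite psi_size /= => ->; rewrite subrr.
Qed.

Lemma sep : ~~ (f * f %| psi \Po l).
Proof.
apply/negP => H.
have H2 : f * f %| ('X^(q ^ n) - 'X) \Po l.
  by apply: dvdp_trans H _; apply: dvdp_comp_poly psi_dvd_Xq.
set T := _ \Po l in H2.
have TE := divpK H2.
have D : T^`() = - (c`_0)%:P.
  rewrite /T deriv_comp deriv_l derivB derivXn derivX -mulr_natr qPR0 ?mulr0 ?expn_gt0 ?(ltnW q1) //.
  by rewrite sub0r -polyC1 -polyCN comp_polyC polyCN polyC1 mulN1r.
have fD : f %| T^`().
  rewrite -TE derivM derivM.
  apply: dvdp_add; first by apply: dvdp_mull; apply: dvdp_mulr.
  by apply: dvdp_mull; apply: dvdp_add; [apply: dvdp_mull | apply: dvdp_mulr].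
have := dvdp_leq _ fD; rewrite D size_polyN size_polyC c0 sf ltnS leqn0.
rewrite oppr_eq0 polyC_eq0 c0 => /(_ isT) /eqP n0.
by move: Hn; rewrite n0.
Qed.

Let G := (psi \Po l) %/ f.
Let N := (n * e)%N.

Lemma GfE : G * f = psi \Po l.
Proof. by rewrite /G divpK // key3 psi_be. Qed.

Lemma iterfix (K : fieldType) (x : K) k r : x ^+ (q ^ n) = x ->
  x ^+ (q ^ (k * n + r)) = x ^+ (q ^ r).
Proof.
move=> H; elim: k => [|k IH]; first by rewrite mul0n add0n.
by rewrite mulSn -addnA -frfr H IH.
Qed.

Lemma core h : irreducible_poly h -> h \is monic -> h %| G -> (N.+1 <= size h)%N.
Proof.
move=> hI hM hG.
pose hMI : monic_irreducible_poly h := (hI, hM).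
pose ik := io hMI.
pose g : {poly %/ h with hMI} := 'qX.
have keyK g' : ((map_poly ik g').[g] == 0) = (h %| g') by rewrite evalK in_qpoly_eq0.
have Gg : (map_poly ik G).[g] = 0 by apply/eqP; rewrite keyK.
have Pg : (map_poly ik (psi \Po l)).[g] = 0 by rewrite -GfE rmorphM hornerM Gg mul0r.
pose b' := Lin ik c g.
have psib : (map_poly ik psi).[b'] = 0 by rewrite comp_eval l_eval in Pg.
pose d := (size h).-1.
have s1 := hI.1.
have d0 : (0 < d)%N by rewrite /d -subn1 subn_gt0.
have gfix : g ^+ (q ^ d) = g.
  have E : #|{poly %/ h with hMI}| = (q ^ d)%N by rewrite cardK.
  by rewrite -E expf_card.
have b'fix : b' ^+ (q ^ n) = b'.
  have := dvd_eval psi_dvd_Xq psib.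
  rewrite rmorphB /= map_polyXn map_polyX hornerD hornerN hornerXn hornerX.
  by move/eqP; rewrite subr_eq0 => /eqP.
pose kap := g ^+ (q ^ n) - g.
have Lkap : Lin ik c kap = 0 by rewrite /kap Lin_subx -Lin_fr b'fix subrr.
pose a' := Lin ik u b'.
have fa : (map_poly ik f).[a'] = 0.
  by have := dvd_eval psi_dvd_fu psib; rewrite comp_eval Lpoly_eval.
have b'd : b' ^+ (q ^ d) = b' by rewrite /b' Lin_fr gfix.
have a'd : a' ^+ (q ^ d) = a' by rewrite /a' Lin_fr b'd.
have a'n : a' ^+ (q ^ n) = a' by rewrite /a' Lin_fr b'fix.
have [k0|kn0] := eqVneq kap 0.
  have gn : g ^+ (q ^ n) = g by apply/eqP; rewrite -subr_eq0 -/kap k0.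
  have ag : a' = g by rewrite /a' /b' invLin.
  have hf : h %| f by rewrite -keyK -ag fa.
  have hef : h %= f by apply: fI => //; rewrite neq_ltn s1 orbT.
  have hf' : h = f by apply/eqP; rewrite -eqp_monic.
  exfalso; move/negP: sep; apply; rewrite -GfE.
  by rewrite dvdp_mul // -hf'.
have ed : (e %| d)%N.
  have kd : kap ^+ (q ^ d) = kap.
    by rewrite /kap (frB ik) !frfr addnC -frfr gfix.
  have [cd|ncd] := boolP (c %| 'X^d - 1); first exact: c_ord.
  have cop : coprimep c ('X^d - 1) by rewrite irreducible_poly_coprime //; exact: cMI.1.
  have := Bezout_Lin cop Lkap; rewrite LinXn1 kd subrr => /(_ erefl) k0.
  by move: kn0; rewrite k0 eqxx.
have nd : (n %| d)%N.
  rewrite /dvdn; apply/negPn/negP => r0.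
  have ar : a' ^+ (q ^ (d %% n)) = a'.
    by rewrite -(@iterfix _ a' (d %/ n) (d %% n) a'n) -divn_eq.
  have := DEG fI fa ar; rewrite lt0n r0 sf /= => /(_ isT).
  by rewrite leqNgt ltn_mod Hn.
have : (N %| d)%N by rewrite /N Gauss_dvd // nd ed.
by move/(dvdn_leq d0); rewrite /d -ltnS prednK // (ltn_trans _ s1).
Qed.

Lemma G_size : size G = N.+1.
Proof.
have fn0 : f != 0 by rewrite monic_neq0.
rewrite /G size_divp // sf /=.
have := size_comp_poly psi l; rewrite psi_size size_l /=.
move=> E; have sP : size (psi \Po l) = (n * q ^ m).+1.
  have pos : (0 < n * q ^ m)%N by rewrite muln_gt0 Hn expn_gt0 (ltnW q1).
  rewrite -E prednK //; move: pos; rewrite -E; by case: (size _).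
by rewrite sP /N mulnBr muln1 subSn // leq_pmulr // expn_gt0 (ltnW q1).
Qed.

Lemma G_irr : irreducible_poly G.
Proof.
have Gn0 : G != 0 by rewrite -size_poly_eq0 G_size.
split; first by rewrite G_size ltnS /N muln_gt0 Hn e_gt0.
move=> g g1 gG.
have gn0 : g != 0 by apply: contraNneq Gn0 => g0; move: gG; rewrite g0 dvd0p => /eqP ->.
have sg : (1 < size g)%N by rewrite ltn_neqAle eq_sym g1 size_poly_gt0.
have [h [hI hM hg]] := FACT sg.
have := core hI hM (dvdp_trans hg gG); rewrite -G_size => H.
rewrite -dvdp_size_eqp // eqn_leq dvdp_leq //=.
by apply: (leq_trans H); apply: dvdp_leq.
Qed.

End UV.

Theorem main_res : [/\ irreducible_poly psi, size psi = n.+1,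
      f %| (psi \Po linpoly m b),
      irreducible_poly ((psi \Po linpoly m b) %/ f) &
      size ((psi \Po linpoly m b) %/ f) = (n * (#|F| ^ m - 1)).+1].
Proof.
have [[u v] /= Huv] := uv_ex.
split.
- exact: psi_irr.
- exact: psi_size Huv.
- by rewrite key3 psi_be.
- exact: G_irr Huv.
- exact: G_size Huv.
Qed.
End Main.

End Helpers.

Theorem mainTheorem6 (F : finFieldType) (m n : nat) (b : nat -> F)
    (f psi : {poly F}) :
  (1 <= m)%N -> (1 <= n)%N ->
  coprime n (#|F| ^ m - 1) ->
  primitive_poly (conv_assoc m b) -> size (conv_assoc m b) = m.+1 ->
  conv_assoc m b != 'X - 1 ->
  f \is monic -> irreducible_poly f -> size f = n.+1 ->
  psi \is monic ->
  f %| (psi \Po (linpoly m b %% f)) ->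
  (forall p : {poly F}, p != 0 -> f %| (p \Po (linpoly m b %% f)) ->
     (size psi <= size p)%N) ->
  [/\ irreducible_poly psi, size psi = n.+1,
      f %| (psi \Po linpoly m b),
      irreducible_poly ((psi \Po linpoly m b) %/ f) &
      size ((psi \Po linpoly m b) %/ f) = (n * (#|F| ^ m - 1)).+1].
Proof.
move=> H1 H2 H3 H4 H5 H6 H7 H8 H9 H10 H11 H12.
by apply: Helpers.main_res.
Qed.
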